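(* Let $p\leq q$, let $0\leq a_1\leq\dots\leq a_p$, and let $L(s)=L_a(s)$ be an H-curve in $\mathrm{Gr}_{p,q}$ with invariants $a_1,\dots,a_p$. Let $s_1<s_2<s_3$ be such that the points $L(s_1),L(s_2),L(s_3)$ are pairwise sufficiently near on this curve. Then for all $j=1,\dots,p$, $$\Psi_j[L(s_1),L(s_2)]+\Psi_j[L(s_2),L(s_3)]=\Psi_j[L(s_1),L(s_3)].$$
   Context: $\mathrm{Gr}_{p,q}$ is the set of $p$-dimensional linear subspaces of $\mathbb{R}^{p+q}$ with the standard scalar product. Jordan angles: for $L,M\in\mathrm{Gr}_{p,q}$ with orthonormal bases $e_i$ of $L$, $f_j$ of $M$, let $\lambda_1\geq\dots\geq\lambda_p$ be the singular values of $(\langle e_i,f_j\rangle)$ and $\Psi_j[L,M]=\arccos\lambda_j$. H-curve: given $0\leq a_1\leq\dots\leq a_p$ and an orthonormal basis $e_1,\dots,e_p,f_1,\dots,f_p,r_1,\dots,r_{q-p}$ of $\mathbb{R}^{p+q}$, $L_a(s)$ is the span of $v_j(s)=\cos(a_js)e_j+\sin(a_js)f_j$, $j=1,\dots,p$; the $a_j$ are the invariants of the curve. Points $L_a(s),L_a(t)$ are sufficiently near if $a_p|s-t|\leq\pi/2$. *)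

(* Defs.v *)
From HB Require Import structures.
From mathcomp Require Import all_boot all_order all_algebra.
From mathcomp Require Import all_classical all_reals all_analysis.
Set Implicit Arguments. Unset Strict Implicit. Unset Printing Implicit Defensive.
Import Order.TTheory GRing.Theory Num.Theory.
Local Open Scope ring_scope.
Local Open Scope classical_set_scope.

Section Defs.
Variable R : realType.

Definition sprod {n : nat} (u v : 'rV[R]_n) : R := (u *m v^T) 0 0.

Definition is_onb {p n : nat} (E A : 'M[R]_(p, n)) : Prop :=
  E *m E^T = 1%:M /\ (E == A)%MS.

Definition is_singvals {p : nat} (M : 'M[R]_p) (s : 'rV[R]_p) : Prop :=
  (forall i, 0 <= s 0 i) /\
  (forall i j : 'I_p, (i <= j)%N -> s 0 j <= s 0 i) /\
  exists U V : 'M[R]_p, [/\ U *m U^T = 1%:M, V *m V^T = 1%:M &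
                         M = U *m diag_mx s *m V].

(* singular values lambda_1 >= ... >= lambda_p of the matrix (<e_i, f_j>)
   for orthonormal bases e of the row space of A and f of that of B *)
Definition jordan_cos {p n : nat} (A B : 'M[R]_(p, n)) : 'rV[R]_p :=
  xget 0 [set s | exists E F : 'M[R]_(p, n),
                   is_onb E A /\ is_onb F B /\ is_singvals (E *m F^T) s].

(* Jordan angle Psi_j[L, M] = arccos lambda_j  (j : 'I_p, 0-based) *)
Definition Psi {p n : nat} (j : 'I_p) (A B : 'M[R]_(p, n)) : R :=
  acos (jordan_cos A B 0 j).

Definition orthonormal_frame {p q : nat} (e f : 'I_p -> 'rV[R]_(p + q))
  (r : 'I_(q - p) -> 'rV[R]_(p + q)) : Prop :=
  [/\ (forall i j, sprod (e i) (e j) = (i == j)%:R),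
      (forall i j, sprod (f i) (f j) = (i == j)%:R),
      (forall k l, sprod (r k) (r l) = (k == l)%:R),
      (forall i j, sprod (e i) (f j) = 0) &
      ((forall i k, sprod (e i) (r k) = 0) /\
       (forall i k, sprod (f i) (r k) = 0))].

Definition Hcurve {p q : nat} (a : 'I_p -> R) (e f : 'I_p -> 'rV[R]_(p + q))
  (s : R) : 'M[R]_(p, p + q) :=
  \matrix_(j < p) (cos (a j * s) *: e j + sin (a j * s) *: f j).

(* a_p = the largest invariant (max over j; equals a_p when 0 <= a_1 <= ... <= a_p) *)
Definition amax {p : nat} (a : 'I_p -> R) : R := \big[Num.max/0]_(j < p) a j.

Definition sufficiently_near {p : nat} (a : 'I_p -> R) (s t : R) : Prop :=
  amax a * `|s - t| <= pi / 2.

End Defs.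

(* Main.v *)
Require Import Defs.
From HB Require Import structures.
From mathcomp Require Import all_boot all_order all_algebra.
From mathcomp Require Import all_classical all_reals all_analysis.
Import Order.TTheory GRing.Theory Num.Theory.
Local Open Scope ring_scope.

Section Aux.
Variable R : realType.

Lemma orthC n (U : 'M[R]_n) : U *m U^T = 1%:M -> U^T *m U = 1%:M.
Proof. exact: mulmx1C. Qed.

Lemma char_poly_conj n (U X : 'M[R]_n) : U *m U^T = 1%:M ->
  char_poly (U *m X *m U^T) = char_poly X.
Proof.
move=> HU.
have HX : char_poly_mx (U *m X *m U^T) =
  map_mx polyC U *m char_poly_mx X *m map_mx polyC U^T.
  rewrite /char_poly_mx mulmxBr mulmxBl -!map_mxM.
  rewrite mul_mx_scalar -scalemxAl -map_mxM HU map_scalar_mx /= scale_scalar_mx mulr1 /=.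
  by [].
rewrite /char_poly HX !det_mulmx mulrC mulrA -det_mulmx -map_mxM.
by rewrite orthC // map_scalar_mx /= det_scalar expr1n mul1r.
Qed.

Lemma sv_unique n (M : 'M[R]_n) s t : is_singvals M s -> is_singvals M t -> s = t.
Proof.
move=> [s0 [smon [U [V [HU HV HM]]]]] [t0 [tmon [U' [V' [HU' HV' HM']]]]].
have MM : forall (U V : 'M[R]_n) (s : 'rV_n), U *m U^T = 1%:M -> V *m V^T = 1%:M ->
   M = U *m diag_mx s *m V ->
   M *m M^T = U *m diag_mx (\row_i (s 0 i ^+ 2)) *m U^T.
  move=> U1 V1 s1 HU1 HV1 ->.
  rewrite !trmx_mul tr_diag_mx !mulmxA -[_ *m V1 *m V1^T]mulmxA HV1 mulmx1.
  rewrite -[U1 *m diag_mx s1 *m diag_mx s1]mulmxA mulmx_diag; congr (_ *m diag_mx _ *m _).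
have E1 := MM _ _ _ HU HV HM; have E2 := MM _ _ _ HU' HV' HM'.
have CP : char_poly (diag_mx (\row_i (s 0 i ^+ 2))) =
          char_poly (diag_mx (\row_i (t 0 i ^+ 2))).
  have := char_poly_conj _ U (diag_mx (\row_i (s 0 i ^+ 2))) HU.
  have := char_poly_conj _ U' (diag_mx (\row_i (t 0 i ^+ 2))) HU'.
  by rewrite -E1 -E2 => -> ->.
rewrite !char_poly_trig ?diag_mx_is_trig // in CP.
pose fs := fun i : 'I_n => s 0 i ^+ 2.
pose ft := fun i : 'I_n => t 0 i ^+ 2.
have CP' : \prod_(x <- map fs (enum 'I_n)) ('X - x%:P) =
           \prod_(x <- map ft (enum 'I_n)) ('X - x%:P).
  rewrite !big_map.
  have H1 : forall u : 'rV[R]_n, \prod_(i < n) ('X - (diag_mx (\row_i (u 0 i ^+ 2)) i i)%:P)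
      = \prod_(i <- Finite.enum 'I_n) ('X - (u 0 i ^+ 2)%:P).
    move=> u; rewrite [index_enum _]unlock; apply: eq_bigr => i _; by rewrite !mxE eqxx mulr1n.
  by rewrite -!H1.
have Hperm := prod_XsubC_eq CP'.
have sortedE : forall g : 'I_n -> R, (forall i j : 'I_n, (i <= j)%N -> g j <= g i) ->
    sorted (fun x y => y <= x) (map g (enum 'I_n)).
  move=> g Hg; rewrite sorted_map.
  apply: (@sub_sorted _ (relpre val leq)).
    by move=> i j /= /Hg.
  by rewrite -sorted_map val_enum_ord iota_sorted.
have Heq : map fs (enum 'I_n) = map ft (enum 'I_n).
  apply: (sorted_eq (leT := fun x y : R => y <= x)) => //.
  - by move=> x y z h1 h2; apply: le_trans h2 h1.
  - by move=> x y /andP[h1 h2]; apply/eqP; rewrite eq_le h1 h2.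
  - apply: sortedE => i j ij; rewrite /fs lerXn2r ?nnegrE //; exact: smon.
  - apply: sortedE => i j ij; rewrite /ft lerXn2r ?nnegrE //; exact: tmon.
apply/rowP => i.
apply/eqP; rewrite -(@eqrXn2 _ 2) //; last first.
move/eq_in_map: Heq => /(_ i); rewrite mem_enum => /(_ isT).
by rewrite /fs /ft => ->.
Qed.

Lemma sv_orth n (M Q P : 'M[R]_n) s : is_singvals M s ->
  Q *m Q^T = 1%:M -> P *m P^T = 1%:M -> is_singvals (Q *m M *m P^T) s.
Proof.
move=> [s0 [smon [U [V [HU HV HM]]]]] HQ HP.
split => //; split => //; exists (Q *m U), (V *m P^T); split.
- by rewrite trmx_mul mulmxA -(mulmxA Q) HU mulmx1 HQ.
- rewrite trmx_mul trmxK mulmxA -(mulmxA V) orthC // mulmx1 HV //.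
- by rewrite HM !mulmxA.
Qed.

Lemma onb_rel p n (E E' A : 'M[R]_(p, n)) : is_onb E A -> is_onb E' A ->
  exists Q : 'M[R]_p, Q *m Q^T = 1%:M /\ E = Q *m E'.
Proof.
move=> [HE /andP[EA AE]] [HE' /andP[E'A AE']].
have /submxP[Q HQ] : (E <= E')%MS by apply: submx_trans EA AE'.
exists Q; split => //.
have : E *m E^T = Q *m (E' *m E'^T) *m Q^T by rewrite HQ trmx_mul !mulmxA.
by rewrite HE HE' mulmx1.
Qed.

Lemma jordan_cos_eq p n (A B : 'M[R]_(p, n)) (d : 'rV[R]_p) :
  A *m A^T = 1%:M -> B *m B^T = 1%:M -> is_singvals (A *m B^T) d ->
  jordan_cos A B = d.
Proof.
move=> HA HB Hd.
have eqr : forall m (X : 'M[R]_(m, n)), (X == X)%MS by move=> m X; apply/andP; split; exact: submx_refl.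
apply: xget_unique.
  by exists A, B; split; [split => //; exact: eqr | split => //; split => //; exact: eqr].
move=> y [E [F [HE [HF Hy]]]].
have [Q [HQ HEQ]] := onb_rel _ _ _ _ _ HE (conj HA (eqr _ A)).
have [P [HP HFP]] := onb_rel _ _ _ _ _ HF (conj HB (eqr _ B)).
rewrite HEQ HFP in Hy.
have := sv_orth _ _ _ _ _ Hd HQ HP.
rewrite !mulmxA => H.
rewrite trmx_mul !mulmxA in Hy.
exact: (sv_unique _ _ _ _ Hy H).
Qed.
End Aux.

Section Curve.
Variable R : realType.

Lemma sprodDl n (u v w : 'rV[R]_n) : sprod (u + v) w = sprod u w + sprod v w.
Proof. by rewrite /sprod mulmxDl mxE. Qed.
Lemma sprodDr n (u v w : 'rV[R]_n) : sprod w (u + v) = sprod w u + sprod w v.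
Proof. by rewrite /sprod linearD /= mulmxDr mxE. Qed.
Lemma sprodZl n c (u w : 'rV[R]_n) : sprod (c *: u) w = c * sprod u w.
Proof. by rewrite /sprod -scalemxAl mxE. Qed.
Lemma sprodZr n c (u w : 'rV[R]_n) : sprod w (c *: u) = c * sprod w u.
Proof. by rewrite /sprod linearZ /= -scalemxAr mxE. Qed.
Lemma sprodC n (u w : 'rV[R]_n) : sprod u w = sprod w u.
Proof. rewrite /sprod; have -> : u *m w^T = (w *m u^T)^T by rewrite trmx_mul trmxK. by rewrite mxE. Qed.

Lemma Hcurve_mul p q (a : 'I_p -> R) (e f : 'I_p -> 'rV[R]_(p + q)) r
  (Hframe : orthonormal_frame e f r) s t i j :
  (Hcurve a e f s *m (Hcurve a e f t)^T) i j
    = (i == j)%:R * cos (a i * s - a i * t).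
Proof.
case: Hframe => Hee Hff _ Hef _.
have -> : (Hcurve a e f s *m (Hcurve a e f t)^T) i j =
   sprod (cos (a i * s) *: e i + sin (a i * s) *: f i)
         (cos (a j * t) *: e j + sin (a j * t) *: f j).
  rewrite /sprod !mxE; apply: eq_bigr => k _; by rewrite !mxE.
rewrite !sprodDl !sprodDr !sprodZl !sprodZr Hee Hff Hef (sprodC _ (f i)) Hef.
case: eqP => [<-|_]; last by rewrite !mulr0 !addr0 mul0r.
by rewrite cosB !mulr1 !mulr0 addr0 add0r mul1r.
Qed.

End Curve.

Lemma Psi_near (R : realType) (p q : nat) (a : 'I_p -> R)
  (Ha0 : forall j, 0 <= a j)
  (Hamono : forall i j : 'I_p, (i <= j)%N -> a i <= a j)
  (e f : 'I_p -> 'rV[R]_(p + q)) (r : 'I_(q - p) -> 'rV[R]_(p + q))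
  (Hframe : orthonormal_frame e f r) (s t : R) (Hst : s < t)
  (N : sufficiently_near a s t) (j : 'I_p) :
  Psi j (Hcurve a e f s) (Hcurve a e f t) = a j * (t - s).
Proof.
have bnd : forall i, 0 <= a i * (t - s) <= pi / 2.
  move=> i; apply/andP; split.
    by apply: mulr_ge0; [exact: Ha0 | rewrite subr_ge0 ltW].
  apply: le_trans N; rewrite distrC gtr0_norm ?subr_gt0 //.
  apply: ler_wpM2r; first by rewrite subr_ge0 ltW.
  exact: le_bigmax.
have inpi : forall i, a i * (t - s) \in `[0, pi].
  move=> i; have /andP[h1 h2] := bnd i; rewrite in_itv /= h1 /=.
  apply: le_trans h2 _; rewrite ler_pdivrMr // ler_peMr ?pi_ge0 // ler1n //.
have HH : forall u, Hcurve a e f u *m (Hcurve a e f u)^T = 1%:M.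
  move=> u; apply/matrixP => i k; rewrite (Hcurve_mul _ _ _ _ _ _ _ Hframe) subrr cos0 mulr1.
  by rewrite !mxE.
pose d := \row_i cos (a i * (t - s)).
have Hd : is_singvals (Hcurve a e f s *m (Hcurve a e f t)^T) d.
  split; first by move=> i; rewrite mxE; apply: cos_ge0_pihalf; have /andP[h1 h2] := bnd i;
    rewrite h2 andbT (le_trans _ h1) // oppr_le0 divr_ge0 ?pi_ge0.
  split.
    move=> i k ik; rewrite !mxE leNgt ltr_cos ?inpi // -leNgt.
    by apply: ler_wpM2r; [rewrite subr_ge0 ltW | exact: Hamono].
  exists 1%:M, 1%:M; split; rewrite ?trmx1 ?mulmx1 //.
  apply/matrixP => i k; rewrite mul1mx (Hcurve_mul _ _ _ _ _ _ _ Hframe) !mxE.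
  case: eqP => [->|_]; last by rewrite mul0r mulr0n.
  by rewrite mul1r mulr1n -cosN opprB mulrBr.
rewrite /Psi (jordan_cos_eq _ _ _ _ _ _ (HH s) (HH t) Hd) mxE.
by rewrite cosK // inpi.
Qed.

Theorem lemma12 (R : realType) (p q : nat) (Hpq : (p <= q)%N)
  (a : 'I_p -> R)
  (Ha0 : forall j, 0 <= a j)
  (Hamono : forall i j : 'I_p, (i <= j)%N -> a i <= a j)
  (e f : 'I_p -> 'rV[R]_(p + q)) (r : 'I_(q - p) -> 'rV[R]_(p + q))
  (Hframe : orthonormal_frame e f r)
  (s1 s2 s3 : R) (H12 : s1 < s2) (H23 : s2 < s3)
  (N12 : sufficiently_near a s1 s2)
  (N23 : sufficiently_near a s2 s3)
  (N13 : sufficiently_near a s1 s3) :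
  forall j : 'I_p,
    Psi j (Hcurve a e f s1) (Hcurve a e f s2)
    + Psi j (Hcurve a e f s2) (Hcurve a e f s3)
    = Psi j (Hcurve a e f s1) (Hcurve a e f s3).
Proof.
move=> j.
rewrite !(Psi_near _ _ _ _ Ha0 Hamono _ _ _ Hframe) //; last exact: lt_trans H23.
by rewrite -mulrDr addrC addrA subrK.
Qed.
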